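(* If a CRN protocol $\Pi=(\mathcal{S},\mathcal{R})$ is stably (resp. haltingly) correct with respect to an interface $\mathcal{I}$ under a weakly fair scheduler, then $\Pi$ is also stably (resp. haltingly) correct with respect to $\mathcal{I}$ under a strongly fair scheduler.
   Context: CRN protocol $\Pi=(\mathcal{S},\mathcal{R})$: finite species set $\mathcal{S}$, finite reaction set $\mathcal{R}\subset\mathbb{N}^{\mathcal{S}}\times\mathbb{N}^{\mathcal{S}}$ of reactions $(\mathbf{r},\mathbf{p})$ with $\|\mathbf{r}\|_1\in\{1,2\}$, $\|\mathbf{r}\|_1\le\|\mathbf{p}\|_1$, each reactant vector $\mathbf{r}$ with $1\le\|\mathbf{r}\|_1\le2$ having at least one reaction, void reactions ($\mathbf{r}=\mathbf{p}$) being the unique reaction for their reactant vector; the protocol respects finite density (configurations reachable from $\mathbf{c}$ have molecular count $O(\|\mathbf{c}\|_1)$). Configurations $\mathbf{c}\in\mathbb{N}^{\mathcal{S}}$, $\|\mathbf{c}\|_1\ge1$; $(\mathbf{r},\mathbf{p})$ applicable to $\mathbf{c}$ iff $\mathbf{r}\le\mathbf{c}$, producing $\mathbf{c}-\mathbf{r}+\mathbf{p}$; $\operatorname{app}(\mathbf{c})$ the applicable reactions; reachability $\stackrel{*}{\rightharpoonup}$. $\mathrm{stab}(Z)=\{\mathbf{c}\in Z:\mathbf{c}\stackrel{*}{\rightharpoonup}\mathbf{c}'\Rightarrow\mathbf{c}'\in Z\}$, $\mathrm{halt}(Z)=\{\mathbf{c}\in Z:\mathbf{c}\stackrel{*}{\rightharpoonup}\mathbf{c}'\Rightarrow\mathbf{c}'=\mathbf{c}\}$.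 An execution $\langle\mathbf{c}^t,\alpha^t\rangle_{t\ge0}$ has $\alpha^t\in\operatorname{app}(\mathbf{c}^t)$, $\mathbf{c}^{t+1}=\alpha^t(\mathbf{c}^t)$. Weakly fair: for all $t$ and $\alpha\in\operatorname{app}(\mathbf{c}^t)$ there is $t'\ge t$ with $\alpha^{t'}=\alpha$ or $\alpha\notin\operatorname{app}(\mathbf{c}^{t'})$. Strongly fair: if a configuration $\mathbf{c}$ appears infinitely often then every configuration reachable from $\mathbf{c}$ appears infinitely often. Stabilizes (halts) into $Z$: some $\mathbf{c}^t\in\mathrm{stab}(Z)$ ($\mathrm{halt}(Z)$). Interface $\mathcal{I}=(\mathcal{U},\mu,\mathcal{C})$: $\mu:\mathcal{S}\to\mathcal{U}$, $\mathcal{C}\subseteq\mathbb{N}^{\mathcal{U}}\times\mathbb{N}^{\mathcal{U}}$, $\mu(\mathbf{c})(u)=\sum_{A:\mu(A)=u}\mathbf{c}(A)$, $Z_{\mathcal{I}}(\mathbf{c}^0)=\{\mathbf{c}:(\mu(\mathbf{c}^0),\mu(\mathbf{c}))\in\mathcal{C}\}$; $\mathbf{c}^0$ valid if $Z_{\mathcal{I}}(\mathbf{c}^0)\ne\emptyset$. $\Pi$ is stably (haltingly) correct w.r.t. $\mathcal{I}$ under a weakly (resp. strongly) fair scheduler if every weakly (resp. strongly) fair execution from a valid $\mathbf{c}^0$ stabilizes (halts) into $Z_{\mathcal{I}}(\mathbf{c}^0)$. *)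

(* Defs.v *)
From mathcomp Require Import all_boot.
Set Implicit Arguments. Unset Strict Implicit. Unset Printing Implicit Defensive.

Section CRN.
Variable S : finType.

Definition config := {ffun S -> nat}.
Definition norm1 (c : config) : nat := \sum_(s : S) c s.
Definition cle (a b : config) : bool := [forall s, a s <= b s].

Definition reaction := (config * config)%type.

Definition react (a : reaction) (c : config) : config :=
  [ffun s => c s - a.1 s + a.2 s].

Definition applicable (a : reaction) (c : config) : bool := cle a.1 c.

Definition app (R : seq reaction) (c : config) (a : reaction) : Prop :=
  a \in R /\ applicable a c.

Definition step (R : seq reaction) (c c' : config) : Prop :=
  exists a, app R c a /\ c' = react a c.

Inductive reach (R : seq reaction) : config -> config -> Prop :=
| reach_refl c : reach R c c
| reach_step c c' c'' : step R c c' -> reach R c' c'' -> reach R c c''.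

Definition is_protocol (R : seq reaction) : Prop :=
  [/\ (forall a, a \in R -> 1 <= norm1 a.1 <= 2 /\ norm1 a.1 <= norm1 a.2),
      (forall r : config, 1 <= norm1 r <= 2 -> exists p, (r, p) \in R),
      (forall r p : config, (r, r) \in R -> (r, p) \in R -> p = r) &
      exists K : nat, forall c c' : config, 1 <= norm1 c -> reach R c c' ->
        norm1 c' <= K * norm1 c].

Definition stab (R : seq reaction) (Z : config -> Prop) (c : config) : Prop :=
  Z c /\ forall c', reach R c c' -> Z c'.
Definition halt (R : seq reaction) (Z : config -> Prop) (c : config) : Prop :=
  Z c /\ forall c', reach R c c' -> c' = c.

Record execution (R : seq reaction) (c0 : config) := Execution {
  ex_c : nat -> config;
  ex_a : nat -> reaction;
  ex_start : ex_c 0 = c0;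
  ex_app : forall t, app R (ex_c t) (ex_a t);
  ex_next : forall t, ex_c t.+1 = react (ex_a t) (ex_c t) }.

Definition weakly_fair (R : seq reaction) (c0 : config) (e : execution R c0) : Prop :=
  forall t a, app R (ex_c e t) a ->
    exists t', t <= t' /\ (ex_a e t' = a \/ ~ app R (ex_c e t') a).

Definition infinitely_often (f : nat -> config) (c : config) : Prop :=
  forall n, exists t, n <= t /\ f t = c.

Definition strongly_fair (R : seq reaction) (c0 : config) (e : execution R c0) : Prop :=
  forall c, infinitely_often (ex_c e) c ->
    forall c', reach R c c' -> infinitely_often (ex_c e) c'.

Definition stabilizes_into (R : seq reaction) (c0 : config) (e : execution R c0)
  (Z : config -> Prop) : Prop := exists t, stab R Z (ex_c e t).
Definition halts_into (R : seq reaction) (c0 : config) (e : execution R c0)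
  (Z : config -> Prop) : Prop := exists t, halt R Z (ex_c e t).

Definition proj (U : finType) (mu : S -> U) (c : config) : {ffun U -> nat} :=
  [ffun u => \sum_(A : S | mu A == u) c A].

Definition Zint (U : finType) (mu : S -> U)
  (C : {ffun U -> nat} -> {ffun U -> nat} -> Prop) (c0 : config) : config -> Prop :=
  fun c => C (proj mu c0) (proj mu c).

Definition valid (U : finType) (mu : S -> U)
  (C : {ffun U -> nat} -> {ffun U -> nat} -> Prop) (c0 : config) : Prop :=
  1 <= norm1 c0 /\ exists c, Zint mu C c0 c.

Inductive sched := Weak | Strong.
Inductive mode := Stably | Haltingly.

Definition fair (sc : sched) (R : seq reaction) (c0 : config) (e : execution R c0) :=
  match sc with Weak => weakly_fair e | Strong => strongly_fair e end.

Definition into (m : mode) (R : seq reaction) (c0 : config) (e : execution R c0)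
  (Z : config -> Prop) :=
  match m with Stably => stabilizes_into e Z | Haltingly => halts_into e Z end.

Definition correct (m : mode) (sc : sched) (R : seq reaction) (U : finType)
  (mu : S -> U) (C : {ffun U -> nat} -> {ffun U -> nat} -> Prop) : Prop :=
  forall c0 : config, valid mu C c0 ->
    forall e : execution R c0, fair sc e -> into m e (Zint mu C c0).

End CRN.

(* Main.v *)
Require Import Defs.
From mathcomp Require Import all_boot.
From Stdlib Require Import Classical.
Set Implicit Arguments. Unset Strict Implicit. Unset Printing Implicit Defensive.

Lemma inf_often_fin (T : finType) (g : nat -> T) :
  exists x, forall n, exists t, n <= t /\ g t = x.
Proof.
apply NNPP => H.
have H1 : forall x, exists n, forall t, n <= t -> g t <> x.
  move=> x; apply NNPP => H2; apply H; exists x => n; apply NNPP => H3.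
  apply H2; exists n => t Ht Hg; apply H3; exists t; split => //.
have H2 : forall l : seq T, exists n, forall t, n <= t -> g t \notin l.
  elim=> [|x l [n IH]]; first by exists 0.
  have [m Hm] := H1 x; exists (maxn n m) => t Ht; rewrite in_cons negb_or.
  apply/andP; split.
    by apply/eqP; apply: Hm; exact: leq_trans (leq_maxr n m) Ht.
  by apply: IH; exact: leq_trans (leq_maxl n m) Ht.
have [n Hn] := H2 (enum T).
by move: (Hn n (leqnn n)); rewrite mem_enum.
Qed.

Lemma inf_often_bounded (S : finType) (f : nat -> config S) B :
  (forall t s, f t s <= B) -> exists c, infinitely_often f c.
Proof.
move=> HB.
pose g t : {ffun S -> 'I_B.+1} := [ffun s => inord (f t s)].
have [x Hx] := inf_often_fin g.
have [t0 [_ Ht0]] := Hx 0.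
exists (f t0) => n; have [t [Hn Ht]] := Hx n; exists t; split => //.
apply/ffunP => s.
have : g t s = g t0 s by rewrite Ht Ht0.
rewrite !ffunE => /(congr1 val) /=; by rewrite !inordK // ltnS.
Qed.

Lemma exec_reach (S : finType) (R : seq (reaction S)) c0 (e : execution R c0) k s :
  reach R (ex_c e s) (ex_c e (s + k)).
Proof.
elim: k s => [|k IH] s; first by rewrite addn0; constructor.
rewrite -addSnnS; apply: reach_step (IH s.+1).
exists (ex_a e s); split; [exact: ex_app | exact: ex_next].
Qed.

Lemma coord_le_norm (S : finType) (c : config S) s : c s <= norm1 c.
Proof. by rewrite /norm1 (bigD1 s) //= leq_addr. Qed.

Lemma norm_pos (S : finType) (c : config S) : 0 < norm1 c -> exists s, 0 < c s.
Proof.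
move=> Hc; case: (pickP (fun s => 0 < c s)) => [s Hs|H]; first by exists s.
move: Hc; rewrite /norm1 big1 // => s _.
by apply/eqP; rewrite -leqn0 leqNgt H.
Qed.

Lemma react_pos (S : finType) (R : seq (reaction S)) a c :
  is_protocol R -> a \in R -> 0 < norm1 (react a c).
Proof.
case=> H1 _ _ _ aR; have [/andP [h1 _] h2] := H1 a aR.
have [s Hs] := norm_pos (leq_trans h1 h2).
apply: leq_trans _ (coord_le_norm _ s); rewrite ffunE.
by apply: leq_trans Hs _; apply: leq_addl.
Qed.

Lemma has_app (S : finType) (R : seq (reaction S)) c :
  is_protocol R -> 0 < norm1 c -> has (fun a => applicable a c) R.
Proof.
case=> _ H2 _ _ Hc; have [s Hs] := norm_pos Hc.
pose r : config S := [ffun x => nat_of_bool (x == s)].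
have nr : norm1 r = 1.
  rewrite /norm1 (bigD1 s) //= big1 ?ffunE ?eqxx // => x /negbTE.
  by rewrite ffunE => ->.
have [p Hp] : exists p, (r, p) \in R by apply: H2; rewrite nr.
apply/hasP; exists (r, p) => //.
rewrite /applicable /cle; apply/forallP => x /=; rewrite ffunE.
by case: eqP => [->|].
Qed.

Definition dflt (S : finType) : reaction S := ([ffun=> 0], [ffun=> 0]).

Section Constr.
Variables (S : finType) (R : seq (reaction S)) (c0 : config S)
  (e : execution R c0) (t0 : nat).

Definition sel t (c : config S) : reaction S :=
  if t < t0 then ex_a e t else
  if applicable (nth (dflt S) R (t %% size R)) c then nth (dflt S) R (t %% size R)
  else nth (dflt S) R (find (fun a => applicable a c) R).

Fixpoint cf t := match t with 0 => c0 | t.+1 => react (sel t (cf t)) (cf t) end.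

Lemma cf_prefix t : t <= t0 -> cf t = ex_c e t.
Proof.
elim: t => [|t IH] Ht /=; first by rewrite ex_start.
rewrite IH ?(ltnW Ht) // /sel Ht ex_next //.
Qed.

Hypothesis HR : is_protocol R.
Hypothesis Hc0 : 0 < norm1 c0.

Lemma sel_app t : 0 < norm1 (cf t) -> app R (cf t) (sel t (cf t)).
Proof.
move=> Hp; rewrite /sel; case: ifP => Ht.
  by rewrite cf_prefix ?(ltnW Ht) //; exact: ex_app.
have Hh := has_app HR Hp.
have Hn : 0 < size R by case: (R) Hh.
case: ifP => Ha.
  by split => //; apply: mem_nth; rewrite ltn_mod.
split; first by apply: mem_nth; rewrite -has_find.
exact: (nth_find (dflt S) Hh).
Qed.

Lemma cf_pos t : 0 < norm1 (cf t).
Proof.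
elim: t => [|t IH] //=; apply: (react_pos _ HR).
by case: (sel_app IH).
Qed.

Definition exe : execution R c0 :=
  @Execution S R c0 cf (fun t => sel t (cf t)) erefl (fun t => sel_app (cf_pos t))
    (fun t => erefl).

Lemma exe_fair : weakly_fair exe.
Proof.
move=> t a /= [aR _].
have Hn : 0 < size R by case: (R) aR.
set j := index a R; have Hj : j < size R by rewrite index_mem.
exists ((t + t0) * size R + j); split.
  apply: leq_trans (leq_addr _ _); apply: leq_trans (leq_pmulr _ Hn).
  exact: leq_addr.
have Hge : ((t + t0) * size R + j < t0) = false.
  apply/negbTE; rewrite -leqNgt; apply: leq_trans (leq_addr _ _).
  apply: leq_trans (leq_pmulr _ Hn); exact: leq_addl.
rewrite /sel Hge modnMDl modn_small // nth_index //.
case: ifP => Ha; first by left.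
by right => -[_]; rewrite Ha.
Qed.
End Constr.

Theorem corollary3p4 (S : finType) (R : seq (reaction S)) (U : finType)
  (mu : S -> U) (C : {ffun U -> nat} -> {ffun U -> nat} -> Prop) :
  is_protocol R ->
  forall m : mode, correct m Weak R mu C -> correct m Strong R mu C.
Proof.
move=> HR m Hw c0 Hv e Hs.
have [Hc0 _] := Hv.
have [_ _ _ [K HK]] := HR.
have [c Hc] : exists c, infinitely_often (ex_c e) c.
  apply: (@inf_often_bounded _ _ (K * norm1 c0)) => t s.
  apply: leq_trans (coord_le_norm _ s) _; apply: HK => //.
  by have := exec_reach e t 0; rewrite add0n ex_start.
have [t0 [_ Ht0]] := Hc 0.
have Hf := Hw c0 Hv (exe e t0 HR Hc0) (@exe_fair _ _ _ e t0 HR Hc0).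
have key : forall t1, exists t, ex_c e t = cf e t0 t1.
  move=> t1; case: (leqP t1 t0) => Ht.
    by exists t1; rewrite cf_prefix.
  have Hr : reach R c (cf e t0 t1).
    rewrite -Ht0 -(cf_prefix e (leqnn t0)) -(subnKC (ltnW Ht)).
    exact: (exec_reach (exe e t0 HR Hc0)).
  by have [t [_ Htt]] := Hs c Hc _ Hr 0; exists t.
case: m Hw Hf => _ /= [t1 Ht1]; have [t Ht] := key t1; exists t; rewrite Ht; exact: Ht1.
Qed.
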